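(* Let $T$ be a ranked monad. Then trace equivalence is an $\mathcal{O}(\mathrm{LB}_0T)$-valued equivalence relation on $T1$: for all $m_1,m_2,m_3\in T1$, $$[\![m_1\sim m_1]\!]=\top,\qquad[\![m_1\sim m_2]\!]\le[\![m_2\sim m_1]\!],\qquad[\![m_1\sim m_2]\!]\wedge[\![m_2\sim m_3]\!]\le[\![m_1\sim m_3]\!].$$ Consequently, for every complemented open $u$ of $\mathrm{LB}_0T$, the relation $\sim_u$ is an equivalence relation on $T1$.
   Context: Monads on $\mathbf{Set}$: sets $TA$, $\mathrm{return}$, $\mathbin{\gg\!=}\colon TA\times(TB)^A\to TB$ with monad laws; $t\gg s:=t\mathbin{\gg\!=}\lambda a.s$; ranked of rank $\kappa$ (regular): every $t\in TA$ is $t'\mathbin{\gg\!=}\lambda i.\mathrm{return}\,f(i)$ with $t'\in TI$, $|I|<\kappa$. $1=\{*\}$, $2=\{0,1\}$. $\mathrm{LB}_0T$: the locale whose frame is presented by generators $[b]$ ($b\in T2$) with relations $[t\mapsto a]\wedge[t\mapsto a']=\bot$ ($a\ne a'$), $[t\gg\mathrm{return}\,a\mapsto a]=\top$, $[t\mathbin{\gg\!=}u\mapsto b]=\bigvee_a[t\mapsto a]\wedge[t\gg u(a)\mapsto b]$ for all $t\in TA$, $u\colon A\to TB$, $b\in B$, where $[t\mapsto a]:=[t\mathbin{\gg\!=}\lambda a'.\mathrm{return}(\delta_a(a'))]$, $\delta_a(a')=1$ iff $a'=a$. Trace equivalence: $[\![m\sim_1m']\!]=\bigvee\{[t\mapsto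 a]:A$ a set with $|A|\le\kappa$, $t\in TA$, $u,u'\colon A\to T1$, $a\in A$, $u(a)=u'(a)$, $m=t\mathbin{\gg\!=}u$, $m'=t\mathbin{\gg\!=}u'\}$; for $k\ge2$, $[\![m_1\sim_km_k]\!]=\bigvee\{\bigwedge_{i=1}^{k-1}[\![m_i\sim_1m_{i+1}]\!]:m_2,\ldots,m_{k-1}\in T1\}$; $[\![m\sim m']\!]=\bigvee_{k\ge1}[\![m\sim_km']\!]$. For a complemented open $u$, $m\sim_um'$ iff $u\le[\![m\sim m']\!]$. *)

(* Defs.v *)
From Stdlib Require Import List ClassicalEpsilon.
Import ListNotations.

Record Monad := {
  T : Type -> Type;
  ret : forall A : Type, A -> T A;
  bind : forall A B : Type, T A -> (A -> T B) -> T B;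
  bind_ret_l : forall A B (a : A) (f : A -> T B), bind A B (ret A a) f = f a;
  bind_ret_r : forall A (t : T A), bind A A t (ret A) = t;
  bind_assoc : forall A B C (t : T A) (f : A -> T B) (g : B -> T C),
      bind B C (bind A B t f) g = bind A C t (fun a => bind B C (f a) g)
}.

Definition seqM (M : Monad) (A B : Type) (t : T M A) (s : T M B) : T M B :=
  bind M A B t (fun _ => s).

(** * Cardinals: a cardinal kappa is represented by a type K of size kappa *)
Definition injective {A B : Type} (f : A -> B) := forall x y, f x = f y -> x = y.
Definition card_le (A K : Type) : Prop := exists f : A -> K, injective f.
Definition card_lt (A K : Type) : Prop := card_le A K /\ ~ card_le K A.

Definition regular (K : Type) : Prop :=
  card_le nat K /\
  forall (I : Type) (X : I -> Type),
    card_lt I K -> (forall i, card_lt (X i) K) -> card_lt {i : I & X i} K.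

Definition ranked (M : Monad) (K : Type) : Prop :=
  forall (A : Type) (t : T M A), exists (I : Type) (t' : T M I) (f : I -> A),
    card_lt I K /\ t = bind M I A t' (fun i => ret M A (f i)).

(** delta_a(a') = 1 iff a' = a  (1 = true, 0 = false) *)
Definition delta {A : Type} (a a' : A) : bool :=
  if excluded_middle_informative (a' = a) then true else false.

(** the generator [t |-> a] is [t >>= \a'. return (delta_a a')] in T2 *)
Definition mt (M : Monad) (A : Type) (t : T M A) (a : A) : T M bool :=
  bind M A bool t (fun a' => ret M bool (delta a a')).

(** * The frame O(LB_0 T), presented by generators T2 and relations.
    Construction: the free frame on generators G = T2 is the frame of
    downsets of the free meet-semilattice (finite sets of generators, here
    lists, ordered by reverse inclusion; meet = concatenation).  The presented
    frame is the frame of downsets D that are saturated for the relations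
    (l <= r is respected by D iff for all F, F /\ r <= D implies F /\ l <= D). *)

Definition FF (M : Monad) := list (T M bool) -> Prop.

Definition gen_dn (M : Monad) (b : T M bool) : FF M := fun F => In b F.

(** the defining equations l = r, with both sides evaluated in the free frame *)
Inductive presEq (M : Monad) : FF M -> FF M -> Prop :=
| eq_disj : forall (A : Type) (t : T M A) (a a' : A), a <> a' ->
    presEq M (fun F => In (mt M A t a) F /\ In (mt M A t a') F) (fun _ => False)
| eq_ret : forall (A C : Type) (t : T M C) (a : A),
    presEq M (gen_dn M (mt M A (seqM M C A t (ret M A a)) a)) (fun _ => True)
| eq_bind : forall (A B : Type) (t : T M A) (u : A -> T M B) (b : B),
    presEq M (gen_dn M (mt M B (bind M A B t u) b))
             (fun F => exists a : A, In (mt M A t a) F /\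
                                     In (mt M B (seqM M A B t (u a)) b) F).

Definition downset (M : Monad) (D : FF M) : Prop :=
  forall F F', (forall x, In x F' -> In x F) -> D F' -> D F.

Definition respects (M : Monad) (D : FF M) (l r : FF M) : Prop :=
  forall F, (forall H, r H -> D (F ++ H)) -> forall H, l H -> D (F ++ H).

Definition isO (M : Monad) (D : FF M) : Prop :=
  downset M D /\
  forall l r, presEq M l r -> respects M D l r /\ respects M D r l.

Definition leO (M : Monad) (D E : FF M) : Prop := forall F, D F -> E F.
Definition eqO (M : Monad) (D E : FF M) : Prop := leO M D E /\ leO M E D.
Definition topO (M : Monad) : FF M := fun _ => True.
Definition meetO (M : Monad) (D E : FF M) : FF M := fun F => D F /\ E F.
Definition closureO (M : Monad) (X : FF M) : FF M :=
  fun F => forall E, isO M E -> leO M X E -> E F.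
Definition joinO (M : Monad) (S : FF M -> Prop) : FF M :=
  closureO M (fun F => exists D, S D /\ D F).
Definition botO (M : Monad) : FF M := joinO M (fun _ => False).

Definition genO (M : Monad) (b : T M bool) : FF M := closureO M (gen_dn M b).
Definition mapsto (M : Monad) (A : Type) (t : T M A) (a : A) : FF M :=
  genO M (mt M A t a).

Definition sim1 (M : Monad) (K : Type) (m m' : T M unit) : FF M :=
  joinO M (fun D => exists (A : Type) (t : T M A) (u u' : A -> T M unit) (a : A),
    card_le A K /\ u a = u' a /\ m = bind M A unit t u /\
    m' = bind M A unit t u' /\ D = mapsto M A t a).

Fixpoint chain (M : Monad) (K : Type) (m : T M unit) (l : list (T M unit)) : FF M :=
  match l with
  | [] => topO M
  | m' :: r => meetO M (sim1 M K m m') (chain M K m' r)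
  end.

Definition simk (M : Monad) (K : Type) (k : nat) (m m' : T M unit) : FF M :=
  match k with
  | 0 => botO M (* unused *)
  | 1 => sim1 M K m m'
  | S (S j) => joinO M (fun D => exists mid : list (T M unit),
                 length mid = j /\ D = chain M K m (mid ++ [m']))
  end.

Definition sim (M : Monad) (K : Type) (m m' : T M unit) : FF M :=
  joinO M (fun D => exists k, 1 <= k /\ D = simk M K k m m').

Definition complemented (M : Monad) (u : FF M) : Prop :=
  isO M u /\ exists v, isO M v /\ eqO M (meetO M u v) (botO M) /\
    eqO M (joinO M (fun D => D = u \/ D = v)) (topO M).

Definition simu (M : Monad) (K : Type) (u : FF M) (m m' : T M unit) : Prop :=
  leO M u (sim M K m m').

(* Main.v *)
Require Import Defs.
From Stdlib Require Import List Lia.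
Import ListNotations.

Ltac incl_tac := let x := fresh in let Hx := fresh in
  intros x Hx; rewrite ?in_app_iff in *; firstorder.

Lemma leO_trans M A B C : leO M A B -> leO M B C -> leO M A C.
Proof. unfold leO; auto. Qed.

Lemma closure_isO M X : isO M (closureO M X).
Proof.
  split.
  - intros F F' Hinc H E HE HXE. destruct HE as [Hd Hr].
    apply (Hd F F' Hinc). apply H; [split; auto | auto].
  - intros l r Hp. split; intros F Hr H Hl E HE HXE;
      destruct HE as [Hd Hres].
    + apply (proj1 (Hres l r Hp) F); auto.
      intros H' Hr'. apply (Hr H' Hr' E); [split; auto|auto].
    + apply (proj2 (Hres l r Hp) F); auto.
      intros H' Hr'. apply (Hr H' Hr' E); [split; auto|auto].
Qed.

Lemma closure_min M X E : isO M E -> leO M X E -> leO M (closureO M X) E.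
Proof. intros HE HX F HF. apply HF; auto. Qed.

Lemma join_le M S E : isO M E -> (forall D, S D -> leO M D E) -> leO M (joinO M S) E.
Proof.
  intros HE H. apply closure_min; auto. intros F [D [HD HF]]. eapply H; eauto.
Qed.

Lemma join_ge M (S : FF M -> Prop) D : S D -> leO M D (joinO M S).
Proof. intros HS F HF E HE HXE. apply HXE. exists D; auto. Qed.

Lemma join_mono M (S S' : FF M -> Prop) :
  (forall D, S D -> S' D) -> leO M (joinO M S) (joinO M S').
Proof.
  intros H. apply join_le. apply closure_isO. intros D HD. apply join_ge; auto.
Qed.

Lemma meet_isO M A B : isO M A -> isO M B -> isO M (meetO M A B).
Proof.
  intros [Ad Ar] [Bd Br]. split.
  - intros F F' Hi [H1 H2]. split; eauto.
  - intros l r Hp. split; intros F Hr H Hl; split.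
    + apply (proj1 (Ar l r Hp) F); auto. intros H' Hr'; apply (Hr H' Hr').
    + apply (proj1 (Br l r Hp) F); auto. intros H' Hr'; apply (Hr H' Hr').
    + apply (proj2 (Ar l r Hp) F); auto. intros H' Hr'; apply (Hr H' Hr').
    + apply (proj2 (Br l r Hp) F); auto. intros H' Hr'; apply (Hr H' Hr').
Qed.

Lemma top_isO M : isO M (topO M).
Proof. split. intros ? ? ? ?; exact I. intros; split; intros ? ? ? ?; exact I. Qed.

Lemma shift_isO M E F : isO M E -> isO M (fun G => E (F ++ G)).
Proof.
  intros [Ed Er]. split.
  - intros G G' Hi H. apply (Ed _ (F ++ G')); auto. incl_tac.
  - intros l r Hp. split; intros F0 Hr H Hl; rewrite app_assoc.
    + apply (proj1 (Er l r Hp) (F ++ F0)); auto.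
      intros H' Hr'. rewrite <- app_assoc. auto.
    + apply (proj2 (Er l r Hp) (F ++ F0)); auto.
      intros H' Hr'. rewrite <- app_assoc. auto.
Qed.

Lemma imp_isO M (Y : FF M) E : isO M E -> isO M (fun F => forall G, Y G -> E (F ++ G)).
Proof.
  intros [Ed Er]. split.
  - intros F F' Hi H G HG. apply (Ed _ (F' ++ G)); auto. incl_tac.
  - intros l r Hp. split; intros F0 Hr H Hl G HG.
    + apply (Ed _ ((F0 ++ G) ++ H)); [incl_tac|].
      apply (proj1 (Er l r Hp) (F0 ++ G)); auto.
      intros H' Hr'. apply (Ed _ ((F0 ++ H') ++ G)); [incl_tac|]. auto.
    + apply (Ed _ ((F0 ++ G) ++ H)); [incl_tac|].
      apply (proj2 (Er l r Hp) (F0 ++ G)); auto.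
      intros H' Hr'. apply (Ed _ ((F0 ++ H') ++ G)); [incl_tac|]. auto.
Qed.

Lemma distr M (S S' : FF M -> Prop) :
  (forall D, S D -> isO M D) -> (forall D, S' D -> isO M D) ->
  leO M (meetO M (joinO M S) (joinO M S'))
    (joinO M (fun D => exists A B, S A /\ S' B /\ D = meetO M A B)).
Proof.
  intros HS HS'.
  set (E := joinO M (fun D => exists A B, S A /\ S' B /\ D = meetO M A B)).
  assert (HE : isO M E) by apply closure_isO.
  assert (H1 : leO M (joinO M S) (fun F => forall G, joinO M S' G -> E (F ++ G))).
  { apply join_le. apply imp_isO; auto.
    intros A HA F HAF.
    apply (closure_min M _ (fun G => E (F ++ G))). apply shift_isO; auto.
    intros G [B [HB HBG]].
    apply (join_ge M _ (meetO M A B)). exists A, B; auto.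
    split.
    - apply (proj1 (HS A HA) _ F); auto. incl_tac.
    - apply (proj1 (HS' B HB) _ G); auto. incl_tac. }
  intros F [HF1 HF2]. specialize (H1 F HF1 F HF2).
  apply (proj1 HE _ (F ++ F)); auto. incl_tac.
Qed.

Lemma sim1_sym M K m m' : leO M (sim1 M K m m') (sim1 M K m' m).
Proof.
  apply join_mono. intros D [A [t [u [u' [a [Hc [Hu [Hm [Hm' HD]]]]]]]]].
  exists A, t, u', u, a. repeat split; auto.
Qed.

Lemma chain_isO M K m l : isO M (chain M K m l).
Proof.
  revert m; induction l; intros m; simpl.
  - apply top_isO.
  - apply meet_isO; auto. apply closure_isO.
Qed.

Lemma chain_app M K l1 m m2 l2 F :
  chain M K m (l1 ++ m2 :: l2) F <-> chain M K m (l1 ++ [m2]) F /\ chain M K m2 l2 F.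
Proof.
  revert m; induction l1; intros m; simpl; unfold meetO, topO.
  - tauto.
  - rewrite IHl1. tauto.
Qed.

Lemma chain_rev M K l m m' F :
  chain M K m (l ++ [m']) F -> chain M K m' (rev l ++ [m]) F.
Proof.
  revert m; induction l; intros m; simpl; unfold meetO, topO.
  - intros [H _]. split; auto. apply sim1_sym; auto.
  - intros [H1 H2]. rewrite <- app_assoc. simpl. apply chain_app. split; auto.
    simpl. unfold meetO, topO. split; auto. apply sim1_sym; auto.
Qed.

Definition simL M K m m' : FF M :=
  joinO M (fun D => exists mid, D = chain M K m (mid ++ [m'])).

Lemma sim_simL M K m m' : leO M (sim M K m m') (simL M K m m').
Proof.
  apply join_le. apply closure_isO.
  intros D [k [Hk HD]]; subst.
  destruct k as [|[|j]]; [lia| |].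
  - intros F HF. apply (join_ge M _ (chain M K m ([] ++ [m']))).
    exists []. reflexivity. simpl. split; auto. exact I.
  - simpl. apply join_le. apply closure_isO.
    intros D [mid [_ HD]]; subst. apply join_ge. exists mid; reflexivity.
Qed.

Lemma simL_sim M K m m' : leO M (simL M K m m') (sim M K m m').
Proof.
  apply join_le. apply closure_isO.
  intros D [mid HD]; subst.
  apply leO_trans with (simk M K (S (S (length mid))) m m').
  - simpl. apply join_ge. exists mid; split; reflexivity.
  - apply join_ge. exists (S (S (length mid))); split; [lia|reflexivity].
Qed.

Lemma gen_top M b : presEq M (gen_dn M b) (fun _ => True) -> forall F, genO M b F.
Proof.
  intros Hp F E [Hd Hres] HXE.
  destruct (Hres _ _ Hp) as [_ H2].
  rewrite <- (app_nil_r F). apply H2; [|exact I].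
  intros H Hb. apply (Hd _ H); [incl_tac|]. apply HXE. exact Hb.
Qed.

Theorem lemma3p9 (M : Monad) (K : Type) (HK : regular K) (HT : ranked M K) :
  (forall m1 m2 m3 : T M unit,
      eqO M (sim M K m1 m1) (topO M) /\
      leO M (sim M K m1 m2) (sim M K m2 m1) /\
      leO M (meetO M (sim M K m1 m2) (sim M K m2 m3)) (sim M K m1 m3)) /\
  (forall u : FF M, complemented M u ->
      (forall m : T M unit, simu M K u m m) /\
      (forall m m' : T M unit, simu M K u m m' -> simu M K u m' m) /\
      (forall m1 m2 m3 : T M unit,
          simu M K u m1 m2 -> simu M K u m2 m3 -> simu M K u m1 m3)).
Proof.
  assert (Hrefl : forall m, leO M (topO M) (sim M K m m)).
  { intros m F _. apply (join_ge M _ (simk M K 1 m m)).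
    exists 1; split; auto.
    simpl. apply (join_ge M _ (mapsto M unit (ret M unit tt) tt)).
    - exists unit, (ret M unit tt), (fun _ => m), (fun _ => m), tt.
      repeat split; auto.
      + destruct HK as [[f Hf] _]. exists (fun _ => f 0). intros [] [] _; reflexivity.
      + rewrite bind_ret_l; reflexivity.
      + rewrite bind_ret_l; reflexivity.
    - unfold mapsto. apply gen_top.
      pose proof (eq_ret M unit unit (ret M unit tt) tt) as Hp.
      unfold seqM in Hp. rewrite bind_ret_l in Hp. exact Hp. }
  assert (Hsym : forall m1 m2, leO M (sim M K m1 m2) (sim M K m2 m1)).
  { intros m1 m2. eapply leO_trans; [apply sim_simL|].
    eapply leO_trans; [|apply simL_sim].
    apply join_le. apply closure_isO. intros D [mid HD]; subst.
    intros F HF. apply (join_ge M _ (chain M K m2 (rev mid ++ [m1]))).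
    exists (rev mid); reflexivity. apply chain_rev; auto. }
  assert (Htr : forall m1 m2 m3,
    leO M (meetO M (sim M K m1 m2) (sim M K m2 m3)) (sim M K m1 m3)).
  { intros m1 m2 m3.
    apply leO_trans with (meetO M (simL M K m1 m2) (simL M K m2 m3)).
    { intros F [H1 H2]. split; apply sim_simL; auto. }
    eapply leO_trans; [apply distr|].
    - intros D [mid HD]; subst; apply chain_isO.
    - intros D [mid HD]; subst; apply chain_isO.
    - eapply leO_trans; [|apply simL_sim].
      apply join_le. apply closure_isO.
      intros D [A [B [[mid1 HA] [[mid2 HB] HD]]]]; subst.
      intros F [HA HB].
      apply (join_ge M _ (chain M K m1 ((mid1 ++ m2 :: mid2) ++ [m3]))).
      exists (mid1 ++ m2 :: mid2); reflexivity.
      rewrite <- app_assoc. simpl. apply chain_app. split; auto. }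
  split.
  - intros m1 m2 m3. split; [|split; auto].
    split; [intros F _; exact I| apply Hrefl].
  - intros u _. split; [|split].
    + intros m F _. apply Hrefl. exact I.
    + intros m m' H. eapply leO_trans; eauto.
    + intros m1 m2 m3 H1 H2 F HF. apply (Htr m1 m2 m3). split; [apply H1|apply H2]; auto.
Qed.
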